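(* Let $\chi:\mathcal H\to\mathcal H_L^\chi\otimes\mathcal H_R^\chi$ be a splitting map and $A\in\mathcal L(\mathcal H)$. Then $A$ is strictly $\chi$-local if and only if there exists a $\chi$-consistent $\tilde A\in\mathcal L(\mathcal H_L^\chi)$ such that $A=\chi^\dagger(\tilde A\otimes\mathbb 1)\chi$.
   Context: All Hilbert spaces are finite-dimensional and complex. A splitting map on $\mathcal H$ is an isometry $\chi:\mathcal H\to\mathcal H_L^\chi\otimes\mathcal H_R^\chi$; $\pi^\chi=\chi\chi^\dagger$. $\tilde A\in\mathcal L(\mathcal H_L^\chi)$ is $\chi$-consistent if $\pi^\chi(\tilde A\otimes\mathbb 1)=(\tilde A\otimes\mathbb 1)\pi^\chi$. $A\in\mathcal L(\mathcal H)$ is strictly $\chi$-local if there exists $\tilde A\in\mathcal L(\mathcal H_L^\chi)$ with $A\chi^\dagger=\chi^\dagger(\tilde A\otimes\mathbb 1)$ and $\chi A=(\tilde A\otimes\mathbb 1)\chi$. *)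

(* Defs.v *)
From HB Require Import structures.
From mathcomp Require Import all_boot all_order all_algebra.
From mathcomp Require Import complex mxtens.
From mathcomp Require Import reals.
Set Implicit Arguments. Unset Strict Implicit. Unset Printing Implicit Defensive.
Import Order.TTheory GRing.Theory Num.Theory.
Local Open Scope ring_scope.
Local Open Scope complex_scope.

(* Finite-dimensional complex Hilbert spaces are modelled as C^n with
   C = R[i], R : realType; operators are square matrices acting on column
   vectors; H_L (x) H_R = C^(p*q) via the Kronecker product tensmx (A *t B). *)

Definition adj {C : numClosedFieldType} {m n : nat} (A : 'M[C]_(m, n)) : 'M[C]_(n, m) :=
  (map_mx Num.conj A)^T.

Definition is_splitting_map {C : numClosedFieldType} {n p q : nat}
  (chi : 'M[C]_(p * q, n)) : Prop := adj chi *m chi = 1%:M.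

Definition proj_chi {C : numClosedFieldType} {n p q : nat}
  (chi : 'M[C]_(p * q, n)) : 'M[C]_(p * q) := chi *m adj chi.

Definition ampL {C : numClosedFieldType} {p : nat} (q : nat)
  (At : 'M[C]_p) : 'M[C]_(p * q) := At *t (1%:M : 'M[C]_q).

Definition chi_consistent {C : numClosedFieldType} {n p q : nat}
  (chi : 'M[C]_(p * q, n)) (At : 'M[C]_p) : Prop :=
  proj_chi chi *m ampL q At = ampL q At *m proj_chi chi.

Definition strictly_local {C : numClosedFieldType} {n p q : nat}
  (chi : 'M[C]_(p * q, n)) (A : 'M[C]_n) : Prop :=
  exists At : 'M[C]_p,
    A *m adj chi = adj chi *m ampL q At /\ chi *m A = ampL q At *m chi.

(* Main.v *)
Require Import Defs.
From HB Require Import structures.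
From mathcomp Require Import all_boot all_order all_algebra.
From mathcomp Require Import complex mxtens.
From mathcomp Require Import reals.
Local Open Scope ring_scope.
Section S.
Variables (R : realType) (n p q : nat) (chi : 'M[R[i]]_(p * q, n)) (H : adj chi *m chi = 1%:M) (A : 'M[R[i]]_n) (At : 'M[R[i]]_p).

Lemma a1 (H1 : A *m adj chi = adj chi *m (ampL q At)) (H2 : chi *m A = (ampL q At) *m chi) :
  chi *m adj chi *m (ampL q At) = (ampL q At) *m (chi *m adj chi).
Proof. by rewrite -mulmxA -H1 mulmxA H2 -mulmxA. Qed.
Lemma a2 (H2 : chi *m A = (ampL q At) *m chi) : A = adj chi *m (ampL q At) *m chi.
Proof. by rewrite -mulmxA -H2 mulmxA H mul1mx. Qed.
Lemma b1 (H1 : chi *m adj chi *m (ampL q At) = (ampL q At) *m (chi *m adj chi)) :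
  adj chi *m (ampL q At) *m chi *m adj chi = adj chi *m (ampL q At).
Proof.
rewrite -[in LHS]mulmxA -[in LHS]mulmxA -H1.
by rewrite (mulmxA (adj chi) (chi *m adj chi)) (mulmxA (adj chi) chi) H mul1mx.
Qed.
Lemma b2 (H1 : chi *m adj chi *m (ampL q At) = (ampL q At) *m (chi *m adj chi)) :
  chi *m (adj chi *m (ampL q At) *m chi) = (ampL q At) *m chi.
Proof.
rewrite (mulmxA chi (adj chi *m (ampL q At))) (mulmxA chi (adj chi) (ampL q At)) H1.
by rewrite -(mulmxA (ampL q At) (chi *m adj chi) chi) -(mulmxA chi (adj chi) chi) H mulmx1.
Qed.
End S.
Theorem mainTheorem5 (R : realType) (n p q : nat)
  (chi : 'M[R[i]]_(p * q, n)) (hchi : is_splitting_map chi)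
  (A : 'M[R[i]]_n) :
  strictly_local chi A <->
  exists At : 'M[R[i]]_p,
    chi_consistent chi At /\ A = adj chi *m ampL q At *m chi.
Proof.
rewrite /strictly_local /chi_consistent /proj_chi; split.
- move=> [At [H1 H2]]; exists At; split.
  + rewrite /chi_consistent /proj_chi; (eapply a1; eassumption).
  + (eapply a2; eassumption).
- move=> [At [H1 ->]]; exists At; split.
  + (eapply b1; eassumption).
  + (eapply b2; eassumption).
Qed.
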